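(* Let $\mathcal{H}$ be a complex Hilbert space and let $A\in\mathcal{B}(\mathcal{H})$ be a positive operator with $\dim R(A)\ge 2$. Let $T\in\mathcal{B}_A(\mathcal{H})$ and let $q\in\mathbb{C}$ with $0<|q|\le 1$. Then \[ \frac{|q|^2}{4}\,\big\|T^{\sharp_A}T+TT^{\sharp_A}\big\|_A\;\le\; w_{q,A}^2(T)\;\le\;\frac{2-|q|^2+4|q|\sqrt{1-|q|^2}}{2}\,\big\|TT^{\sharp_A}+T^{\sharp_A}T\big\|_A . \]
   Context: $A$ induces the semi-inner product $\langle x,y\rangle_A=\langle Ax,y\rangle$ and seminorm $\|x\|_A=\sqrt{\langle x,x\rangle_A}$. For an operator $S$, $\|S\|_A=\sup\{\|Sx\|_A/\|x\|_A : x\in\overline{R(A)},\,x\neq 0\}$. An operator $W$ is an $A$-adjoint of $T$ if $\langle Tx,y\rangle_A=\langle x,Wy\rangle_A$ for all $x,y$; $\mathcal{B}_A(\mathcal{H})$ is the set of operators admitting an $A$-adjoint, and for $T\in\mathcal{B}_A(\mathcal{H})$, $T^{\sharp_A}$ denotes the unique solution $X$ of $AX=T^*A$ with $R(X)\subseteq \overline{R(A)}$ (the reduced solution). For $q$ with $|q|\le1$, the $A$-$q$-numerical radius is $w_{q,A}(T)=\sup\{|\langle Tx,y\rangle_A| : \|x\|_A=\|y\|_A=1,\ \langle x,y\rangle_A=q\}$. *)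

(* Defs.v *)
From mathcomp Require Import all_boot all_algebra all_classical all_reals.
From mathcomp Require Import complex ereal.
Set Implicit Arguments. Unset Strict Implicit. Unset Printing Implicit Defensive.
Import GRing.Theory Num.Theory.
Local Open Scope ring_scope.
Local Open Scope classical_set_scope.

Section HilbertDefs.
Variable R : realType.
Local Notation C := R[i].
Variable V : lmodType C.
Variable ip : V -> V -> C.   (* inner product, linear in the first argument *)

Definition hnorm (x : V) : R := Num.sqrt (complex.Re (ip x x)).

Record is_inner_product : Prop := {
  ip_linl : forall (a : C) (x y z : V), ip (a *: x + y) z = a * ip x z + ip y z;
  ip_conj : forall x y : V, ip y x = conjc (ip x y);
  ip_pos  : forall x : V, 0 <= ip x x;
  ip_def  : forall x : V, ip x x = 0 -> x = 0 }.

Definition ip_complete : Prop :=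
  forall u : nat -> V,
    (forall e : R, 0 < e -> exists N : nat, forall m n : nat,
        (N <= m)%N -> (N <= n)%N -> hnorm (u m - u n) < e) ->
    exists l : V, forall e : R, 0 < e -> exists N : nat, forall n : nat,
        (N <= n)%N -> hnorm (u n - l) < e.

Definition is_hilbert : Prop := is_inner_product /\ ip_complete.

Definition bounded_op (T : V -> V) : Prop :=
  (forall (a : C) (x y : V), T (a *: x + y) = a *: T x + T y) /\
  exists M : R, forall x : V, hnorm (T x) <= M * hnorm x.

Definition is_adjoint (T Ts : V -> V) : Prop :=
  bounded_op Ts /\ forall x y : V, ip (T x) y = ip x (Ts y).

Definition positive_op (A : V -> V) : Prop :=
  bounded_op A /\ forall x : V, 0 <= ip (A x) x.

Definition range_op (A : V -> V) : set V := [set y | exists x, y = A x].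
Definition in_closure_range (A : V -> V) (y : V) : Prop :=
  forall e : R, 0 < e -> exists x : V, hnorm (y - A x) < e.

Definition dim_range_ge2 (A : V -> V) : Prop :=
  exists x1 x2 : V, range_op A x1 /\ range_op A x2 /\
    forall a b : C, a *: x1 + b *: x2 = 0 -> a = 0 /\ b = 0.

Definition ipA (A : V -> V) (x y : V) : C := ip (A x) y.
Definition normA (A : V -> V) (x : V) : R := Num.sqrt (complex.Re (ipA A x x)).

Definition opnormA (A S : V -> V) : \bar R :=
  ereal_sup [set ((normA A (S x) / normA A x)%:E)%E
            | x in [set x | in_closure_range A x /\ x <> 0]].

Definition is_A_adjoint (A T W : V -> V) : Prop :=
  forall x y : V, ipA A (T x) y = ipA A x (W y).

Definition in_BA (A T : V -> V) : Prop :=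
  bounded_op T /\ exists W, bounded_op W /\ is_A_adjoint A T W.

(* X = T^{#_A}: the (unique) solution X in B(H) of A X = T^* A with
   R(X) contained in the closure of R(A) *)
Definition is_A_sharp (A T X : V -> V) : Prop :=
  bounded_op X /\
  (exists Tstar, is_adjoint T Tstar /\ forall x : V, A (X x) = Tstar (A x)) /\
  (forall x : V, in_closure_range A (X x)).

Definition wqA (A : V -> V) (q : C) (T : V -> V) : \bar R :=
  ereal_sup [set ((Normc.normc (ipA A (T p.1) p.2))%:E)%E
            | p in [set p : V * V | normA A p.1 = 1 /\ normA A p.2 = 1 /\
                                    ipA A p.1 p.2 = q]].

End HilbertDefs.

(* Main.v *)
Require Import Defs.
From mathcomp Require Import all_boot all_algebra all_classical all_reals.
From mathcomp Require Import complex ereal.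
From mathcomp Require Import order ring lra.
Import Order.TTheory GRing.Theory Num.Theory.
Local Open Scope ring_scope.
Set Implicit Arguments. Unset Strict Implicit. Unset Printing Implicit Defensive.

Section RealAux.
Variable R : realType.
Lemma sqrt_le_sq (x a : R) : 0 <= a -> x <= a ^+ 2 -> Num.sqrt x <= a.
Proof.
move=> a0 h; have := ler_wsqrtr h; rewrite sqrtr_sqr ger0_norm //.
Qed.
Lemma sq_le_of_sqrt (x a : R) : 0 <= x -> Num.sqrt x <= a -> x <= a ^+ 2.
Proof.
move=> x0 h; rewrite -(sqr_sqrtr x0); rewrite ler_pXn2r // ?nnegrE ?sqrtr_ge0 //.
exact: le_trans (sqrtr_ge0 x) h.
Qed.
Lemma disc (a b N : R) : 0 <= b -> 0 < N ->
  (forall l : R, 0 <= a + 2 * l * N + l ^+ 2 * N * b) -> N <= a * b.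
Proof.
move=> b0 N0 h.
have [b00|bp] := eqVneq b 0.
  subst b; have := h (- (a + 1) / (2 * N)).
  have -> : 2 * (- (a + 1) / (2 * N)) * N = - (a + 1).
    by field; rewrite lt0r_neq0.
  lra.
have bpos : 0 < b by rewrite lt_def bp b0.
have := h (- b^-1).
have e : - b^-1 * b = -1 by rewrite mulNr mulVf.
move=> H.
have : 0 <= (a + 2 * - b^-1 * N + (- b^-1) ^+ 2 * N * b) * b by rewrite mulr_ge0 // ltW.
have -> : (a + 2 * - b^-1 * N + (- b^-1) ^+ 2 * N * b) * b = a * b - N.
  by field.
lra.
Qed.
End RealAux.

Record form_ok (R : realType) (V : lmodType R[i]) (P : V -> V -> R[i]) : Prop := FormOk {
  f_lin : forall a x y z, P (a *: x + y) z = a * P x z + P y z;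
  f_herm : forall x y, P y x = conjc (P x y);
  f_pos : forall x, 0 <= P x x }.

Section Lin.
Variables (R : realType) (V : lmodType R[i]) (f : V -> V).
Hypothesis hf : forall a x y, f (a *: x + y) = a *: f x + f y.
Lemma lin0 : f 0 = 0.
Proof.
have := hf 1 0 0; rewrite scaler0 addr0 scale1r => h.
by apply: (addrI (f 0)); rewrite addr0 -h.
Qed.
Lemma linD x y : f (x + y) = f x + f y.
Proof. by rewrite -{1}[x]scale1r hf scale1r. Qed.
Lemma linZ a x : f (a *: x) = a *: f x.
Proof. by rewrite -[a *: x]addr0 hf lin0 addr0. Qed.
Lemma linN x : f (- x) = - f x.
Proof. by rewrite -scaleN1r linZ scaleN1r. Qed.
Lemma linB x y : f (x - y) = f x - f y.
Proof. by rewrite linD linN. Qed.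
End Lin.

Section Form.
Variables (R : realType) (V : lmodType R[i]) (P : V -> V -> R[i]).
Hypothesis Pok : form_ok P.
Let Plin := f_lin Pok.
Let Pherm := f_herm Pok.
Let Ppos := f_pos Pok.

Lemma P0l z : P 0 z = 0.
Proof.
have := Plin 1 0 0 z; rewrite scaler0 addr0 mul1r => h.
by apply: (addrI (P 0 z)); rewrite addr0 -h.
Qed.
Lemma PDl x y z : P (x + y) z = P x z + P y z.
Proof. by rewrite -{1}[x]scale1r Plin mul1r. Qed.
Lemma PZl a x z : P (a *: x) z = a * P x z.
Proof. by rewrite -[a *: x]addr0 Plin P0l addr0. Qed.
Lemma PNl x z : P (- x) z = - P x z.
Proof. by rewrite -scaleN1r PZl mulN1r. Qed.
Lemma PBl x y z : P (x - y) z = P x z - P y z.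
Proof. by rewrite PDl PNl. Qed.
Lemma PDr x y z : P x (y + z) = P x y + P x z.
Proof. by rewrite Pherm PDl rmorphD /= -!Pherm. Qed.
Lemma PZr a x y : P x (a *: y) = conjc a * P x y.
Proof. by rewrite Pherm PZl rmorphM /= -Pherm. Qed.
Lemma PNr x y : P x (- y) = - P x y.
Proof. by rewrite Pherm PNl rmorphN /= -Pherm. Qed.
Lemma PBr x y z : P x (y - z) = P x y - P x z.
Proof. by rewrite PDr PNr. Qed.
Lemma P0r x : P x 0 = 0.
Proof. by rewrite Pherm P0l rmorph0. Qed.

Definition Q x := complex.Re (P x x).
Lemma Q_ge0 x : 0 <= Q x.
Proof. by move: (Ppos x); rewrite /Q; case: (P x x) => a b; rewrite lecE /= => /andP[]. Qed.
Lemma Pxx x : P x x = (Q x)%:C%C.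
Proof.
move: (Ppos x); rewrite /Q; case: (P x x) => a b; rewrite lecE /= => /andP[/eqP -> _]; reflexivity.
Qed.

Definition N2 (z : R[i]) := complex.Re z ^+ 2 + complex.Im z ^+ 2.

Lemma P_expand x y t : P (x + t *: y) (x + t *: y) =
  P x x + conjc t * P x y + t * conjc (P x y) + t * conjc t * P y y.
Proof.
rewrite !PDl !PDr !PZl !PZr -Pherm.
by rewrite [P y x]Pherm; ring.
Qed.

Lemma Q_expand x y t : Q (x + t *: y) =
  Q x + 2 * (complex.Re t * complex.Re (P x y) + complex.Im t * complex.Im (P x y))
  + N2 t * Q y.
Proof.
rewrite /Q P_expand !Pxx /N2.
case: t => a b; case: (P x y) => c d /=.
rewrite /=; ring.
Qed.

Lemma CS x y : N2 (P x y) <= Q x * Q y.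
Proof.
have [z0|zp] := eqVneq (N2 (P x y)) 0.
  by rewrite z0 mulr_ge0 // Q_ge0.
have Np : 0 < N2 (P x y).
  by rewrite lt_def zp /N2 addr_ge0 // sqr_ge0.
apply: (@disc R (Q x) (Q y) (N2 (P x y)) (Q_ge0 y) Np).
move=> l; have := Q_ge0 (x + (l%:C%C * P x y) *: y).
rewrite Q_expand.
have -> : N2 (l%:C%C * P x y) = l ^+ 2 * N2 (P x y).
  by rewrite /N2; case: (P x y) => c d /=; ring.
rewrite /N2; case: (P x y) => c d /=.
suff -> : (l * c - 0 * d) * c + (l * d + 0 * c) * d = l * (c ^+ 2 + d ^+ 2).
  by rewrite !mulrA.
ring.
Qed.


Lemma N2_ge0 z : 0 <= N2 z.
Proof. by rewrite /N2 addr_ge0 // sqr_ge0. Qed.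
Lemma N2_eq0 z : N2 z = 0 -> z = 0.
Proof.
case: z => a b; rewrite /N2 /= => h.
have ha : a = 0 by apply/eqP; rewrite -sqrf_eq0; apply/eqP; nra.
have hb : b = 0 by apply/eqP; rewrite -sqrf_eq0; apply/eqP; nra.
by rewrite ha hb.
Qed.
Lemma N2M a b : N2 (a * b) = N2 a * N2 b.
Proof. by case: a => a1 a2; case: b => b1 b2; rewrite /N2 /=; ring. Qed.
Lemma N2_real r : N2 r%:C%C = r ^+ 2.
Proof. by rewrite /N2 /=; ring. Qed.
Lemma N2_conj z : N2 (conjc z) = N2 z.
Proof. by case: z => a b; rewrite /N2 /=; ring. Qed.
Lemma normc_N2 z : Normc.normc z = Num.sqrt (N2 z).
Proof. by case: z. Qed.
Lemma Re_sq_le z : complex.Re z ^+ 2 <= N2 z.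
Proof. by rewrite /N2 lerDl sqr_ge0. Qed.
Lemma Im_sq_le z : complex.Im z ^+ 2 <= N2 z.
Proof. by rewrite /N2 lerDr sqr_ge0. Qed.

Lemma Q0 : Q 0 = 0.
Proof. by rewrite /Q P0l. Qed.
Lemma QZ t x : Q (t *: x) = N2 t * Q x.
Proof. by have := Q_expand 0 x t; rewrite add0r Q0 P0l /= => ->; ring. Qed.
Lemma QN x : Q (- x) = Q x.
Proof. by rewrite -scaleN1r QZ /N2 /=; ring. Qed.
Lemma Q_add x y : Q (x + y) = Q x + Q y + 2 * complex.Re (P x y).
Proof. by have := Q_expand x y 1; rewrite scale1r => ->; rewrite /N2 /=; ring. Qed.
Lemma Q_sub x y : Q (x - y) = Q x + Q y - 2 * complex.Re (P x y).
Proof. by rewrite Q_add QN PNr /=; ring. Qed.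
Lemma parallelogram x y : Q (x + y) + Q (x - y) = 2 * Q x + 2 * Q y.
Proof. by rewrite Q_add Q_sub; ring. Qed.
Lemma Q_line x y l : Q (x + (l%:C%C * P x y) *: y) =
  Q x + 2 * l * N2 (P x y) + l ^+ 2 * N2 (P x y) * Q y.
Proof.
rewrite Q_expand N2M N2_real /N2; case: (P x y) => c d /=; ring.
Qed.
Lemma ReP_le x y : complex.Re (P x y) <= Num.sqrt (Q x) * Num.sqrt (Q y).
Proof.
rewrite -sqrtrM ?Q_ge0 //.
have h : complex.Re (P x y) ^+ 2 <= Q x * Q y := le_trans (Re_sq_le _) (CS x y).
have := ler_wsqrtr h; rewrite sqrtr_sqr; apply: le_trans; exact: ler_norm.
Qed.
Lemma normcP_le x y : Normc.normc (P x y) <= Num.sqrt (Q x) * Num.sqrt (Q y).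
Proof. by rewrite normc_N2 -sqrtrM ?Q_ge0 // ler_wsqrtr // CS. Qed.
Lemma normP_tri x y : Num.sqrt (Q (x + y)) <= Num.sqrt (Q x) + Num.sqrt (Q y).
Proof.
apply: sqrt_le_sq; first by rewrite addr_ge0 // sqrtr_ge0.
rewrite Q_add sqrrD !sqr_sqrtr ?Q_ge0 //.
have := ReP_le x y; lra.
Qed.
Lemma P_eq0 x y : Q x = 0 -> P x y = 0.
Proof. by move=> h; apply: N2_eq0; apply/eqP; rewrite eq_le N2_ge0 andbT; have := CS x y; rewrite h mul0r. Qed.

Lemma ReB (x y : R[i]) : complex.Re (x - y) = complex.Re x - complex.Re y.
Proof. by case: x; case: y. Qed.

Lemma sa_bound (H : V -> V) (W : R) : 0 <= W ->
  (forall u v, H (u + v) = H u + H v) -> (forall t u, H (t *: u) = t *: H u) ->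
  (forall u v, P (H u) v = P u (H v)) ->
  (forall v, `|complex.Re (P (H v) v)| <= W * Q v) ->
  forall u, Q (H u) <= W ^+ 2 * Q u.
Proof.
move=> W0 HD HZ Hsa Hb u.
have HN : forall v, H (- v) = - H v.
  by move=> v; rewrite -scaleN1r HZ scaleN1r.
have key : forall t : R, 2 * t * Q (H u) <= W * (Q u + t ^+ 2 * Q (H u)).
  move=> t; set v := t%:C%C *: H u.
  have e0 : P (H (u + v)) (u + v) - P (H (u - v)) (u - v)
      = 2 * P (H u) v + 2 * P (H v) u.
    rewrite HD [H (u - v)]HD HN PDl PBl !PDr !PNr; ring.
  have e1 : complex.Re (P (H (u + v)) (u + v)) - complex.Re (P (H (u - v)) (u - v))
      = 4 * (t * Q (H u)).
    rewrite -ReB e0 [P (H v) u]Hsa [P v (H u)]Pherm /v PZr Pxx conjc_real.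
    rewrite /=; ring.
  have b1 := Hb (u + v); have b2 := Hb (u - v).
  have pl := parallelogram u v.
  have qv : Q v = t ^+ 2 * Q (H u) by rewrite /v QZ N2_real.
  move: b1 b2 => /ler_normlP [b1' b1] /ler_normlP [b2' b2].
  nra.
have [W00|Wp] := eqVneq W 0.
  subst W.
  have := key 1; rewrite ?mul0r ?expr0n /= ?mul0r; have := Q_ge0 (H u); have := Q_ge0 u; lra.
have Wpos : 0 < W by rewrite lt_def Wp W0.
have := key W^-1.
have e : W * W^-1 = 1 by rewrite mulfV.
move=> h.
have : 2 * W^-1 * Q (H u) * W <= W * (Q u + W^-1 ^+ 2 * Q (H u)) * W.
  by rewrite ler_pM2r.
have -> : 2 * W^-1 * Q (H u) * W = 2 * Q (H u) by field.
have -> : W * (Q u + W^-1 ^+ 2 * Q (H u)) * W = W ^+ 2 * Q u + Q (H u) by field.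
lra.
Qed.
End Form.

Lemma ge0_realC (R : realType) (z : R[i]) : 0 <= z -> z = (complex.Re z)%:C%C.
Proof. by case: z => a b; rewrite lecE /= => /andP[/eqP -> _]; reflexivity. Qed.

Section Main.
Variables (R : realType) (V : lmodType R[i]) (ip : V -> V -> R[i]).
Hypothesis HH : is_hilbert ip.
Variable A : V -> V.
Hypothesis HA : positive_op ip A.
Hypothesis Hdim : dim_range_ge2 A.
Variables T Tsh : V -> V.
Hypothesis HT : in_BA ip A T.
Hypothesis HTsh : is_A_sharp ip A T Tsh.

Let HI := HH.1.
Let ipok : form_ok ip := FormOk (ip_linl HI) (ip_conj HI) (ip_pos HI).
Let Alin := HA.1.1.
Let Tlin := HT.1.1.
Let Tshlin := HTsh.1.1.

Lemma A_sa x y : ip (A x) y = ip x (A y).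
Proof.
pose f x y := ip (A x) y - ip x (A y).
have fxx : forall x, f x x = 0.
  move=> z; rewrite /f [ip z (A z)](ip_conj HI) (ge0_realC (HA.2 z)) conjc_real subrr //.
have fexp : forall x y c, f (x + c *: y) (x + c *: y) =
    f x x + conjc c * f x y + c * f y x + c * conjc c * f y y.
  move=> u v c; rewrite /f linD // linZ //.
  rewrite !(PDl ipok) !(PZl ipok) !(PDr ipok) !(PZr ipok); ring.
have h1 := fexp x y 1; have h2 := fexp x y 'i%C.
rewrite !fxx conjc1 in h1; rewrite !fxx in h2.
have ci : conjc 'i%C = - 'i%C :> R[i] by apply/eqP; rewrite eq_complex /= oppr0 !eqxx.
rewrite ci in h2.
have : 2 * 'i%C * f x y = 0.
  have -> : 2 * 'i%C * f x y = 'i%C * (0 + 1 * f x y + 1 * f y x + 1 * 1 * 0)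
      - (0 + - 'i%C * f x y + 'i%C * f y x + 'i%C * - 'i%C * 0) by ring.
  by rewrite -h1 -h2; ring.
move/eqP; rewrite !mulf_eq0 => /orP[/orP[]|].
- by rewrite pnatr_eq0.
- by rewrite eq_complex /= oner_eq0 andbF.
- by rewrite /f subr_eq0 => /eqP.
Qed.

Let Aok : form_ok (ipA ip A).
Proof.
split.
- by move=> a x y z; rewrite /ipA Alin (PDl ipok) (PZl ipok).
- by move=> x y; rewrite /ipA (ip_conj HI) A_sa.
- by move=> x; exact: HA.2.
Qed.

Local Notation PA := (ipA ip A).
Local Notation QA := (Q (ipA ip A)).

Lemma sh1 x y : PA (Tsh x) y = PA x (T y).
Proof.
case: HTsh => _ [[Ts [[_ Hadj] HAs]] _].
by rewrite /ipA HAs (ip_conj HI) -Hadj -(ip_conj HI).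
Qed.

Lemma sh2 x y : PA (T x) y = PA x (Tsh y).
Proof. by rewrite (f_herm Aok) -sh1 -(f_herm Aok). Qed.

Lemma ATker n y : A n = 0 -> PA (T n) y = 0.
Proof.
case: HT => _ [W [_ HW]] h.
by rewrite HW /ipA h (P0l ipok).
Qed.


Lemma pos_range a : A a <> 0 -> 0 < QA (A a).
Proof.
move=> Aa0; rewrite lt_def Q_ge0 // andbT; apply/eqP => h.
have h2 : A (A a) = 0.
  apply: (ip_def HI); have := P_eq0 Aok (A (A a)) h; by rewrite /ipA.
apply: Aa0; apply: (ip_def HI).
by rewrite A_sa h2 (P0r ipok).
Qed.

Lemma normalize w : 0 < QA w -> exists k : R[i], QA (k *: w) = 1.
Proof.
move=> wp; exists ((Num.sqrt (QA w))^-1)%:C%C.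
rewrite (QZ Aok) N2_real exprVn sqr_sqrtr ?mulVf //; first by rewrite lt0r_neq0.
exact: ltW.
Qed.

Lemma exists_unit : exists x, QA x = 1.
Proof.
case: Hdim => x1 [x2 [[a1 e1] [_ ind]]].
have : A a1 <> 0.
  move=> h; have := ind 1 0; rewrite e1 h scaler0 scale0r addr0 => /(_ erefl) [].
  by move/eqP; rewrite oner_eq0.
move/pos_range/normalize => [k hk]; by exists (k *: A a1).
Qed.

Lemma exists_orth x : exists z, PA x z = 0 /\ QA z = 1.
Proof.
case: Hdim => x1 [x2 [[a1 e1] [[a2 e2] ind]]].
have nz1 : A a1 <> 0.
  move=> h; have := ind 1 0; rewrite e1 h scaler0 scale0r addr0 => /(_ erefl) [].
  by move/eqP; rewrite oner_eq0.
set c1 := conjc (PA x x2); set c2 := - conjc (PA x x1).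
have cc : conjc c1 * PA x x1 + conjc c2 * PA x x2 = 0.
  by rewrite /c1 /c2 rmorphN /= !conjcK; ring.
case: (boolP ((c1 == 0) && (c2 == 0))) => [/andP[/eqP c10 /eqP c20] | nc].
  have hx1 : PA x x1 = 0.
    by move/eqP: c20; rewrite oppr_eq0 conjc_eq0 => /eqP.
  have [k hk] := normalize (pos_range nz1).
  exists (k *: A a1); split => //.
  by rewrite (PZr Aok) -e1 hx1 mulr0.
have ez : c1 *: x1 + c2 *: x2 = A (c1 *: a1 + c2 *: a2).
  by rewrite e1 e2 Alin (linZ Alin).
have nz : A (c1 *: a1 + c2 *: a2) <> 0.
  rewrite -ez => /ind [h1 h2]; move: nc; by rewrite h1 h2 eqxx.
have [k hk] := normalize (pos_range nz).
exists (k *: A (c1 *: a1 + c2 *: a2)); split => //.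
by rewrite (PZr Aok) -ez (PDr Aok) !(PZr Aok) cc mulr0.
Qed.


Lemma ReD (a b : R[i]) : complex.Re (a + b) = complex.Re a + complex.Re b.
Proof. by case: a; case: b. Qed.
Lemma ImD (a b : R[i]) : complex.Im (a + b) = complex.Im a + complex.Im b.
Proof. by case: a; case: b. Qed.

Lemma ii1 : 'i%C * conjc 'i%C = 1 :> R[i].
Proof. apply/eqP; rewrite eq_complex /=; apply/andP; split; apply/eqP; ring. Qed.
Lemma ci : conjc 'i%C = - 'i%C :> R[i].
Proof. by apply/eqP; rewrite eq_complex /= oppr0 !eqxx. Qed.

Definition Hp v := T v + Tsh v.
Definition Kp v := 'i%C *: (Tsh v - T v).

Lemma S_form x y : PA (Tsh (T x) + T (Tsh x)) y * 2 = PA (Hp x) (Hp y) + PA (Kp x) (Kp y).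
Proof.
have hK : PA (Kp x) (Kp y) = PA (Tsh x - T x) (Tsh y - T y).
  by rewrite /Kp (PZl Aok) (PZr Aok) mulrA ii1 mul1r.
rewrite hK /Hp (PDl Aok) [PA (Tsh (T x)) y]sh1 [PA (T (Tsh x)) y]sh2.
rewrite !(PBl Aok) !(PBr Aok) !(PDl Aok) !(PDr Aok); ring.
Qed.

Lemma Hp_lin : (forall u v, Hp (u + v) = Hp u + Hp v) /\ (forall t u, Hp (t *: u) = t *: Hp u).
Proof.
split => [u v|t u]; rewrite /Hp.
  by rewrite (linD Tlin) (linD Tshlin); rewrite addrACA.
by rewrite (linZ Tlin) (linZ Tshlin) scalerDr.
Qed.
Lemma Kp_lin : (forall u v, Kp (u + v) = Kp u + Kp v) /\ (forall t u, Kp (t *: u) = t *: Kp u).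
Proof.
split => [u v|t u]; rewrite /Kp.
  by rewrite (linD Tlin) (linD Tshlin) -scalerDr opprD addrACA.
by rewrite (linZ Tlin) (linZ Tshlin) -scalerBr !scalerA mulrC.
Qed.
Lemma Hp_sa u v : PA (Hp u) v = PA u (Hp v).
Proof. by rewrite /Hp (PDl Aok) (PDr Aok) sh1 sh2 addrC. Qed.
Lemma Kp_sa u v : PA (Kp u) v = PA u (Kp v).
Proof.
rewrite /Kp (PZl Aok) (PZr Aok) ci (PBl Aok) (PBr Aok) sh1 sh2; ring.
Qed.
Lemma Hp_Re v : complex.Re (PA (Hp v) v) = 2 * complex.Re (PA (T v) v).
Proof.
rewrite /Hp (PDl Aok) sh1 [PA v (T v)](f_herm Aok).
case: (PA (T v) v) => a b /=; ring.
Qed.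
Lemma Kp_Re v : complex.Re (PA (Kp v) v) = 2 * complex.Im (PA (T v) v).
Proof.
rewrite /Kp (PZl Aok) (PBl Aok) sh1 [PA v (T v)](f_herm Aok).
case: (PA (T v) v) => a b /=; ring.
Qed.

Lemma small_inv (dl : R) : 0 < dl -> exists N : nat, forall n, (N <= n)%N -> (n.+1%:R)^-1 < dl.
Proof.
move=> dp; exists (Num.Def.archi_bound dl^-1) => n hn.
have dip : 0 <= dl^-1 by rewrite invr_ge0 ltW.
have h := archi_boundP dip.
rewrite invf_plt ?posrE ?ltr0Sn //.
apply: lt_le_trans h _; rewrite ler_nat; exact: leqW.
Qed.

Local Notation Qi := (Q ip).

Lemma sqrt_sq_le (a b : R) : 0 <= b -> 0 <= a -> a <= Num.sqrt b -> a ^+ 2 <= b.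
Proof.
move=> b0 a0 h.
by rewrite -(sqr_sqrtr b0) ler_pXn2r // nnegrE // sqrtr_ge0.
Qed.

Lemma sqrt_lt_of_sq (b e : R) : 0 < e -> b < e ^+ 2 -> Num.sqrt b < e.
Proof.
move=> e0 h; rewrite -(ger0_norm (ltW e0)) -sqrtr_sqr ltr_sqrt //; exact: exprn_gt0.
Qed.

Lemma proj x : exists u, in_closure_range ip A u /\ A u = A x.
Proof.
set E := [set r : R | exists z, r = Num.sqrt (Qi (x - A z))]%classic.
have lbE : has_lbound E by exists 0 => r [z ->]; exact: sqrtr_ge0.
have neE : (E !=set0)%classic by exists (Num.sqrt (Qi (x - A 0))), 0.
set d := inf E.
have dlb : forall z, d <= Num.sqrt (Qi (x - A z)).
  by move=> z; apply: (ge_inf lbE); exists z.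
have d0 : 0 <= d by apply: lb_le_inf => // r [z ->]; exact: sqrtr_ge0.
have ex : forall n : nat, exists z, Num.sqrt (Qi (x - A z)) < d + (n.+1%:R)^-1.
  move=> n; have : d < d + (n.+1%:R)^-1 by rewrite ltrDl invr_gt0 ltr0Sn.
  by move/(inf_lt neE) => [r [z ->] hr]; exists z.
have [zf hz] := choice ex.
set en := fun n : nat => (n.+1%:R : R)^-1.
have en0 : forall n, 0 < en n by move=> n; rewrite /en invr_gt0 ltr0Sn.
have Qle : forall n, Qi (x - A (zf n)) <= (d + en n) ^+ 2.
  move=> n; apply: sq_le_of_sqrt; first exact: Q_ge0.
  exact: ltW (hz n).
have Qge : forall z, d ^+ 2 <= Qi (x - A z) by move=> z; apply: sqrt_sq_le => //; apply: Q_ge0.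
have cb : forall n m, Qi (A (zf n) - A (zf m)) <=
    2 * (d + en n) ^+ 2 + 2 * (d + en m) ^+ 2 - 4 * d ^+ 2.
  move=> n m.
  have pl := parallelogram ipok (x - A (zf n)) (x - A (zf m)).
  have e1 : x - A (zf n) - (x - A (zf m)) = - (A (zf n) - A (zf m)).
    by rewrite !opprD !opprK addrACA subrr add0r.
  set mid := (2^-1 : R[i]) *: (zf n + zf m).
  have e2 : x - A (zf n) + (x - A (zf m)) = (2 : R[i]) *: (x - A mid).
    rewrite /mid (linZ Alin) (linD Alin) scalerBr scalerA mulfV ?scale1r; last first.
      by rewrite pnatr_eq0.
    by rewrite scaler_nat mulr2n addrACA opprD.
  rewrite e1 e2 (QN ipok) (QZ ipok) in pl.
  have n2 : N2 (2 : R[i]) = 4 by rewrite /N2 /=; ring.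
  rewrite n2 in pl.
  have := Qle n; have := Qle m; have := Qge mid; lra.
have cauchy : forall e : R, 0 < e -> exists N : nat, forall m n : nat,
    (N <= m)%N -> (N <= n)%N -> hnorm ip (A (zf m) - A (zf n)) < e.
  move=> e e0.
  set dl := e ^+ 2 / (8 * d + 4 + 4 * e ^+ 2).
  have den0 : 0 < 8 * d + 4 + 4 * e ^+ 2 by have := sqr_ge0 e; lra.
  have dl0 : 0 < dl by rewrite /dl divr_gt0 // exprn_gt0.
  have dl1 : dl <= 1.
    rewrite /dl ler_pdivrMr // mul1r; have := sqr_ge0 e; nra.
  have dle : (8 * d + 4) * dl < e ^+ 2.
    rewrite /dl mulrA ltr_pdivrMr // ; have := exprn_gt0 2 e0; nra.
  have [N hN] := small_inv dl0.
  exists N => m n hm hn.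
  have h1 := hN _ hm; have h2 := hN _ hn.
  apply: sqrt_lt_of_sq => //.
  apply: le_lt_trans (cb m n) _.
  have a0 := en0 m; have b0 := en0 n; move: h1 h2 a0 b0; rewrite -!/(en _).
  set a := en m; set b := en n => h1 h2 a0 b0.
  have p1 : 0 <= d * (dl - a) by rewrite mulr_ge0 // subr_ge0 ltW.
  have p2 : 0 <= d * (dl - b) by rewrite mulr_ge0 // subr_ge0 ltW.
  have p3 : a * a <= dl * 1.
    apply: ler_pM. all: try by apply: ltW. all: try by apply: (le_trans (ltW h1) dl1).
  have p4 : b * b <= dl * 1.
    apply: ler_pM. all: try by apply: ltW. all: try by apply: (le_trans (ltW h2) dl1).
  rewrite mulr1 in p3 p4.
  nra.
have [l hl] := (HH.2) (fun n => A (zf n)) cauchy.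
have cl : in_closure_range ip A l.
  move=> e e0; have [N hN] := hl e e0; exists (zf N).
  by rewrite /hnorm -/(Qi _) -(QN ipok) opprB; apply: hN.
have tri : forall a b, Num.sqrt (Qi (a + b)) <= Num.sqrt (Qi a) + Num.sqrt (Qi b).
  exact: normP_tri ipok.
have hxl : Num.sqrt (Qi (x - l)) <= d.
  apply/ler_addgt0Pr => e e0.
  have e20 : 0 < e / 2 by rewrite divr_gt0.
  have [N1 hN1] := hl _ e20; have [N2' hN2] := small_inv e20.
  set n := maxn N1 N2'.
  have := hN1 n (leq_maxl _ _); have := hN2 n (leq_maxr _ _); have := hz n.
  have -> : x - l = (x - A (zf n)) + (A (zf n) - l) by rewrite addrA subrK.
  rewrite /hnorm -/(Qi _) => h1 h2 h3.
  apply: le_trans (tri _ _) _; rewrite -/(en n) in h1 h2; lra.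
set g := x - l.
have orth : forall z, ip g (A z) = 0.
  move=> z; set w := A z.
  have key : forall t : R[i], Qi g <= Qi (g + t *: w).
    move=> t; rewrite -ler_sqrt ?Q_ge0 //; apply: le_trans hxl _.
    apply/ler_addgt0Pr => e e0.
    have [N hN] := hl _ e0.
    have h := dlb (zf N - t *: z).
    have Ev : x - A (zf N - t *: z) = (g + t *: w) + (l - A (zf N)).
      by rewrite (linB Alin) (linZ Alin) opprB addrACA subrK.
    rewrite Ev in h; apply: le_trans h _; apply: le_trans (tri _ _) _.
    rewrite lerD2l; apply: ltW; rewrite -(QN ipok) opprB; exact: hN.
  apply: N2_eq0; apply/eqP; rewrite eq_le N2_ge0 andbT; apply/negP => /negP.
  rewrite -ltNge => Np.
  have := @disc R 0 (Qi w) (N2 (ip g w)) (Q_ge0 ipok w) Np.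
  rewrite mul0r => h; suff : N2 (ip g w) <= 0 by rewrite leNgt Np.
  apply: h => l0; have := key (l0%:C%C * ip g w); rewrite (Q_line ipok).
  lra.
have Ag : A g = 0.
  apply: (ip_def HI); rewrite A_sa; exact: orth.
exists l; split => //.
by apply/eqP; rewrite eq_sym -subr_eq0 -(linB Alin) Ag.
Qed.

Section WithQ.
Variable q : R[i].
Hypothesis hq0 : 0 < Normc.normc q.
Hypothesis hq1 : Normc.normc q <= 1.

Let N2q_le1 : N2 q <= 1.
Proof.
have := hq1; rewrite normc_N2 => h; have := sq_le_of_sqrt (N2_ge0 q) h; by rewrite expr1n.
Qed.
Let N2q_pos : 0 < N2 q.
Proof. by move: hq0; rewrite normc_N2 sqrtr_gt0. Qed.
Let N2q_E : N2 q = Normc.normc q ^+ 2.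
Proof. by rewrite normc_N2 sqr_sqrtr // N2_ge0. Qed.

Definition sq := Num.sqrt (1 - N2 q).
Let sq2 : sq ^+ 2 = 1 - N2 q.
Proof. by rewrite sqr_sqrtr // subr_ge0. Qed.

Lemma adm x z (e : R) : QA x = 1 -> PA x z = 0 -> QA z = 1 -> e ^+ 2 = 1 ->
  QA (conjc q *: x + (e * sq)%:C%C *: z) = 1 /\ PA x (conjc q *: x + (e * sq)%:C%C *: z) = q.
Proof.
move=> hx hxz hz he; split.
  rewrite (Q_expand Aok) (PZl Aok) hxz mulr0 (QZ Aok) hx hz N2_conj N2_real.
  rewrite /= !mulr0 addr0 exprMn he sq2; ring.
by rewrite (PDr Aok) !(PZr Aok) hxz conjcK (Pxx Aok) hx mulr0 addr0 mulr1.
Qed.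

Section LB.
Variable w : R.
Hypothesis w0 : 0 <= w.
Hypothesis Hw : forall x y, QA x = 1 -> QA y = 1 -> PA x y = q ->
  Normc.normc (PA (T x) y) <= w.

Let Hw2 x y : QA x = 1 -> QA y = 1 -> PA x y = q -> N2 (PA (T x) y) <= w ^+ 2.
Proof.
move=> h1 h2 h3; apply: sq_le_of_sqrt; first exact: N2_ge0.
by rewrite -normc_N2; apply: Hw.
Qed.

Lemma LB1 x : QA x = 1 -> N2 q * N2 (PA (T x) x) <= w ^+ 2.
Proof.
move=> hx; have [z [hxz hz]] := exists_orth x.
have Ey : forall e : R, PA (T x) (conjc q *: x + (e * sq)%:C%C *: z) =
    q * PA (T x) x + e%:C%C * (sq%:C%C * PA (T x) z).
  move=> e; rewrite (PDr Aok) !(PZr Aok) conjcK conjc_real rmorphM /=; ring.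
have hp : (1 : R) ^+ 2 = 1 by rewrite expr1n.
have hm : (-1 : R) ^+ 2 = 1 by rewrite sqrrN expr1n.
have [a1 b1] := adm hx hxz hz hp.
have [a2 b2] := adm hx hxz hz hm.
have h1 := Hw2 hx a1 b1; have h2 := Hw2 hx a2 b2.
rewrite Ey in h1; rewrite Ey in h2.
rewrite -N2M.
move: h1 h2; set a := q * PA (T x) x; set b := sq%:C%C * PA (T x) z.
case: a => a1' a2'; case: b => b1' b2'; rewrite /N2 /=.
move=> h1 h2; nra.
Qed.

Lemma LB2 v : N2 q * N2 (PA (T v) v) <= w ^+ 2 * QA v ^+ 2.
Proof.
have [h0|hp] := eqVneq (QA v) 0.
  rewrite h0 expr0n /= mulr0 [PA (T v) v](f_herm Aok) (P_eq0 Aok _ h0).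
  by rewrite rmorph0 /N2 /= expr0n /= addr0 mulr0.
have qp : 0 < QA v by rewrite lt_def hp Q_ge0.
set k := (Num.sqrt (QA v))^-1.
have k2 : k ^+ 2 * QA v = 1 by rewrite /k exprVn sqr_sqrtr ?mulVf // ltW.
have hv : QA (k%:C%C *: v) = 1 by rewrite (QZ Aok) N2_real.
have := LB1 hv.
rewrite (linZ Tlin) (PZl Aok) (PZr Aok) conjc_real mulrA -rmorphM /= N2M N2_real.
move=> h.
have h' := ler_wpM2r (exprn_ge0 2 (Q_ge0 Aok v)) h.
have E : forall X : R, X * QA v ^+ 2 = N2 q * N2 (PA (T v) v) * (k ^+ 2 * QA v) ^+ 2 ->
   X <= w ^+ 2 -> N2 q * N2 (PA (T v) v) <= w ^+ 2 * QA v ^+ 2.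
  by move=> X eX hX; rewrite -[_ * N2 _]mulr1 -(expr1n _ 2) -k2 -eX ler_wpM2r // exprn_ge0 // Q_ge0.
apply: (E _ _ h); ring.
Qed.

Definition Wp := 2 * w / Normc.normc q.
Lemma Wp_ge0 : 0 <= Wp.
Proof. by rewrite /Wp divr_ge0 ?mulr_ge0 // ltW. Qed.

Lemma abs_le_of_sq (a b : R) : 0 <= b -> a ^+ 2 <= b ^+ 2 -> `|a| <= b.
Proof. move=> b0 h; rewrite -sqrtr_sqr -(ger0_norm b0) -sqrtr_sqr; exact: ler_wsqrtr. Qed.

Lemma Tre_bound v : (2 * complex.Re (PA (T v) v)) ^+ 2 <= (Wp * QA v) ^+ 2 /\
                    (2 * complex.Im (PA (T v) v)) ^+ 2 <= (Wp * QA v) ^+ 2.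
Proof.
have h := LB2 v.
have e : (Wp * QA v) ^+ 2 * N2 q = 4 * (w ^+ 2 * QA v ^+ 2).
  rewrite /Wp N2q_E; field; exact: lt0r_neq0.
have key : 4 * N2 (PA (T v) v) <= (Wp * QA v) ^+ 2.
  rewrite -(ler_pM2r N2q_pos) e; nra.
have := Re_sq_le (PA (T v) v); have := Im_sq_le (PA (T v) v).
move: key; set z := PA (T v) v; rewrite /N2 => key ha hb.
split; nra.
Qed.

Lemma Hp_bound u : QA (Hp u) <= Wp ^+ 2 * QA u.
Proof.
apply: (sa_bound Aok Wp_ge0 Hp_lin.1 Hp_lin.2 Hp_sa) => v.
rewrite Hp_Re; apply: abs_le_of_sq; first by rewrite mulr_ge0 ?Wp_ge0 ?Q_ge0.
exact: (Tre_bound v).1.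
Qed.
Lemma Kp_bound u : QA (Kp u) <= Wp ^+ 2 * QA u.
Proof.
apply: (sa_bound Aok Wp_ge0 Kp_lin.1 Kp_lin.2 Kp_sa) => v.
rewrite Kp_Re; apply: abs_le_of_sq; first by rewrite mulr_ge0 ?Wp_ge0 ?Q_ge0.
exact: (Tre_bound v).2.
Qed.

Lemma nbound (f : V -> V) : (forall u, QA (f u) <= Wp ^+ 2 * QA u) ->
  forall u, Num.sqrt (QA (f u)) <= Wp * Num.sqrt (QA u).
Proof.
move=> hf u; apply: le_trans (ler_wsqrtr (hf u)) _.
by rewrite sqrtrM ?sqr_ge0 // sqrtr_sqr ger0_norm // Wp_ge0.
Qed.

Lemma LB_main x : Num.sqrt (QA (Tsh (T x) + T (Tsh x))) <=
   Wp ^+ 2 * Num.sqrt (QA x).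
Proof.
set y := Tsh (T x) + T (Tsh x).
have hS := S_form x y.
have eRe : complex.Re (PA y y * 2) = 2 * QA y by rewrite /Q; case: (PA y y) => a b /=; ring.
have e2 : 2 * QA y = complex.Re (PA (Hp x) (Hp y)) + complex.Re (PA (Kp x) (Kp y)).
  by rewrite -eRe hS ReD.
have r1 := ReP_le Aok (Hp x) (Hp y); have r2 := ReP_le Aok (Kp x) (Kp y).
have n1 := nbound Hp_bound x; have n2 := nbound Hp_bound y.
have n3 := nbound Kp_bound x; have n4 := nbound Kp_bound y.
have sx0 := sqrtr_ge0 (QA x); have sy0 := sqrtr_ge0 (QA y).
have W0 := Wp_ge0.
have a1 := sqrtr_ge0 (QA (Hp x)); have a2 := sqrtr_ge0 (QA (Hp y)).
have a3 := sqrtr_ge0 (QA (Kp x)); have a4 := sqrtr_ge0 (QA (Kp y)).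
have ey : QA y = Num.sqrt (QA y) ^+ 2 by rewrite sqr_sqrtr // Q_ge0.
have m1 : Num.sqrt (QA (Hp x)) * Num.sqrt (QA (Hp y)) <= (Wp * Num.sqrt (QA x)) * (Wp * Num.sqrt (QA y)).
  by apply: ler_pM.
have m2 : Num.sqrt (QA (Kp x)) * Num.sqrt (QA (Kp y)) <= (Wp * Num.sqrt (QA x)) * (Wp * Num.sqrt (QA y)).
  by apply: ler_pM.
have key : Num.sqrt (QA y) ^+ 2 <= Wp ^+ 2 * Num.sqrt (QA x) * Num.sqrt (QA y).
  have : 2 * QA y <= 2 * (Wp ^+ 2 * Num.sqrt (QA x) * Num.sqrt (QA y)).
    rewrite e2; apply: le_trans (lerD r1 r2) _.
    apply: le_trans (lerD m1 m2) _; rewrite le_eqVlt; apply/orP; left; apply/eqP; ring.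
  rewrite -ey; lra.
have [z0|zp] := eqVneq (Num.sqrt (QA y)) 0.
  by rewrite z0 mulr_ge0 // exprn_ge0.
have sp : 0 < Num.sqrt (QA y) by rewrite lt_def zp sy0.
by rewrite -(ler_pM2r sp) -expr2.
Qed.

End LB.

Lemma amgm (al be : R) : al * be <= (al ^+ 2 + be ^+ 2) / 2.
Proof. have := sqr_ge0 (al - be). nra. Qed.

Definition cq := (2 - Normc.normc q ^+ 2 + 4 * Normc.normc q * Num.sqrt (1 - Normc.normc q ^+ 2)) / 2.

Lemma real_UB (k ma mb al be s N : R) : 0 <= k -> k <= 1 -> 0 <= s -> s ^+ 2 = 1 - k ^+ 2 ->
  0 <= ma -> ma <= al -> ma <= be -> 0 <= mb -> mb <= al * s ->
  al ^+ 2 + be ^+ 2 <= N ->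
  (k * ma + mb) ^+ 2 <= (2 - k ^+ 2 + 4 * k * s) / 2 * N.
Proof.
move=> k0 k1 s0 es ma0 h1 h2 mb0 h3 hN.
have al0 : 0 <= al by apply: le_trans h1.
have be0 : 0 <= be by apply: le_trans h2.
have f1 : ma * ma <= al * be by apply: ler_pM.
have f2 : ma * mb <= al * (al * s) by apply: ler_pM.
have f3 : mb * mb <= (al * s) * (al * s) by apply: ler_pM.
have M0 : 0 <= al ^+ 2 + be ^+ 2 by rewrite addr_ge0 // sqr_ge0.
have g1 : k ^+ 2 * (ma * ma) <= k ^+ 2 * ((al ^+ 2 + be ^+ 2) / 2).
  apply: ler_wpM2l; first exact: sqr_ge0.
  apply: le_trans f1 _; exact: amgm.
have g2 : k * (ma * mb) <= k * s * (al ^+ 2 + be ^+ 2).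
  rewrite -mulrA; apply: ler_wpM2l => //; apply: le_trans f2 _.
  have : s * al ^+ 2 <= s * (al ^+ 2 + be ^+ 2) by apply: ler_wpM2l => //; rewrite lerDl sqr_ge0.
  by rewrite expr2; lra.
have g3 : mb * mb <= s ^+ 2 * (al ^+ 2 + be ^+ 2).
  apply: le_trans f3 _.
  have : s ^+ 2 * al ^+ 2 <= s ^+ 2 * (al ^+ 2 + be ^+ 2) by apply: ler_wpM2l; rewrite ?sqr_ge0 // lerDl sqr_ge0.
  by rewrite !expr2; lra.
have c0 : 0 <= (2 - k ^+ 2 + 4 * k * s) / 2.
  have : k ^+ 2 <= 1 by rewrite -(expr1n _ 2) ler_pXn2r ?nnegrE //.
  move=> kk; have p : 0 <= 4 * k * s by rewrite !mulr_ge0.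
  apply: divr_ge0 => //; lra.
have e : (k * ma + mb) ^+ 2 = k ^+ 2 * (ma * ma) + 2 * (k * (ma * mb)) + mb * mb by ring.
rewrite e; apply: le_trans (_ : (2 - k ^+ 2 + 4 * k * s) / 2 * (al ^+ 2 + be ^+ 2) <= _).
  rewrite es in g3; nra.
exact: ler_wpM2l.
Qed.

Lemma UB_main u y : QA u = 1 -> QA y = 1 -> PA u y = q ->
  N2 (PA (T u) y) <= cq * Num.sqrt (QA (T (Tsh u) + Tsh (T u))).
Proof.
move=> hu hy huy.
set v := y - conjc q *: u.
have ey : y = conjc q *: u + v by rewrite /v addrC subrK.
have eP : PA (T u) y = q * PA (T u) u + PA (T u) v.
  by rewrite {1}ey (PDr Aok) (PZr Aok) conjcK.
have Qv : QA v = 1 - N2 q.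
  rewrite /v -scaleNr (Q_expand Aok) [PA y u](f_herm Aok) huy hy hu.
  rewrite /N2; case: q => a b /=; ring.
set a := PA (T u) u; set b := PA (T u) v.
have ha1 : N2 a <= QA (T u) by have := CS Aok (T u) u; rewrite hu mulr1.
have ha2 : N2 a <= QA (Tsh u) by have := CS Aok u (Tsh u); rewrite hu mul1r /a sh2.
have hb : N2 b <= QA (T u) * (1 - N2 q) by rewrite -Qv; exact: CS.
have hS : QA (T u) + QA (Tsh u) <= Num.sqrt (QA (T (Tsh u) + Tsh (T u))).
  have := ReP_le Aok (T (Tsh u) + Tsh (T u)) u.
  by rewrite hu sqrtr1 mulr1 (PDl Aok) ReD [PA (T (Tsh u)) u]sh2 [PA (Tsh (T u)) u]sh1 /Q addrC.
set k := Normc.normc q.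
have k0 : 0 <= k by rewrite /k normc_N2 sqrtr_ge0.
have ek : N2 q = k ^+ 2 by rewrite /k N2q_E.
have tri : Normc.normc (q * a + b) <= k * Normc.normc a + Normc.normc b.
  by apply: le_trans (le_normcD _ _) _; rewrite Normc.normcM.
have H1 : N2 (q * a + b) <= (k * Normc.normc a + Normc.normc b) ^+ 2.
  apply: sq_le_of_sqrt; first exact: N2_ge0.
  by rewrite -normc_N2.
rewrite eP; apply: le_trans H1 _.
rewrite /cq -/k.
have s0 : 0 <= Num.sqrt (1 - k ^+ 2) by exact: sqrtr_ge0.
have k21 : k ^+ 2 <= 1 by rewrite -ek.
apply: (@real_UB k _ _ (Num.sqrt (QA (T u))) (Num.sqrt (QA (Tsh u))) _ _ k0 hq1 s0) => //.
- by rewrite sqr_sqrtr // subr_ge0.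
- by rewrite normc_N2 sqrtr_ge0.
- by rewrite normc_N2; apply: ler_wsqrtr.
- by rewrite normc_N2; apply: ler_wsqrtr.
- by rewrite normc_N2 sqrtr_ge0.
- by rewrite normc_N2 -sqrtrM ?Q_ge0 //; apply: ler_wsqrtr; rewrite -ek.
- by rewrite !sqr_sqrtr ?Q_ge0.
Qed.

Lemma cq_ge0 : 0 <= cq.
Proof.
rewrite /cq; set k := Normc.normc q.
have k0 : 0 <= k by rewrite /k normc_N2 sqrtr_ge0.
have kk : k ^+ 2 <= 1 by rewrite -(expr1n _ 2) ler_pXn2r ?nnegrE.
have p : 0 <= 4 * k * Num.sqrt (1 - k ^+ 2) by rewrite !mulr_ge0 // sqrtr_ge0.
apply: divr_ge0 => //; lra.
Qed.

Lemma normA1 x : (normA ip A x = 1) <-> (QA x = 1).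
Proof.
rewrite /normA; split => [h|h]; last by rewrite -/(QA x) h sqrtr1.
by rewrite -(sqr_sqrtr (Q_ge0 Aok x)) /Q /ipA h expr1n.
Qed.

Lemma adm_exists : exists x y, QA x = 1 /\ QA y = 1 /\ PA x y = q.
Proof.
have [x hx] := exists_unit; have [z [hxz hz]] := exists_orth x.
have h1 : (1 : R) ^+ 2 = 1 by rewrite expr1n.
have [a b] := adm hx hxz hz h1.
by exists x, (conjc q *: x + (1 * sq)%:C%C *: z).
Qed.

Lemma final :
  let aq := Normc.normc q in
  (((aq ^+ 2 / 4)%R%:E * opnormA ip A (fun x => (Tsh (T x) + T (Tsh x))%R)
      <= wqA ip A q T * wqA ip A q T)%E) /\
  ((wqA ip A q T * wqA ip A q T
      <= ((2 - aq ^+ 2 + 4 * aq * Num.sqrt (1 - aq ^+ 2)) / 2)%R%:E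
           * opnormA ip A (fun x => (T (Tsh x) + Tsh (T x))%R))%E).
Proof.
move=> aq.
set wq := wqA ip A q T.
have ub : forall x y, QA x = 1 -> QA y = 1 -> PA x y = q ->
    ((Normc.normc (PA (T x) y))%:E <= wq)%E.
  move=> x y hx hy hxy; apply: ereal_sup_ubound; exists (x, y) => //=.
  by rewrite !normA1.
have [x0 [y0 [hx0 [hy0 hxy0]]]] := adm_exists.
have ub0 := ub _ _ hx0 hy0 hxy0.
split.
  case Ew : wq => [w| |]; last first.
  - by rewrite mulNyNy leey.
  - by rewrite mulyy leey.
  rewrite Ew in ub ub0.
  have Hw : forall x y, QA x = 1 -> QA y = 1 -> PA x y = q -> (Normc.normc (PA (T x) y) <= w)%R.
    by move=> x y hx hy hxy; rewrite -lee_fin; apply: ub.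
  have w0 : (0 <= w)%R.
    by apply: le_trans (Hw _ _ hx0 hy0 hxy0); rewrite normc_N2 sqrtr_ge0.
  have hop : (opnormA ip A (fun x => (Tsh (T x) + T (Tsh x))%R) <= ((Wp w) ^+ 2)%:E)%E.
    apply: ge_ereal_sup => _ [x [_ _] <-]; rewrite lee_fin.
    have [n0|np] := eqVneq (normA ip A x) 0%R.
      by rewrite n0 invr0 mulr0 sqr_ge0.
    have npos : (0 < normA ip A x)%R by rewrite lt_def np sqrtr_ge0.
    rewrite ler_pdivrMr //; by apply: LB_main.
  have c0 : (0 <= (aq ^+ 2 / 4)%:E)%E by rewrite lee_fin divr_ge0 // exprn_ge0 // ltW.
  apply: le_trans (lee_wpmul2l c0 hop) _.
  rewrite -EFinM -EFinM lee_fin /Wp -/aq le_eqVlt; apply/orP; left; apply/eqP.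
  field; exact: lt0r_neq0.
have key : forall x y, QA x = 1 -> QA y = 1 -> PA x y = q ->
    ((N2 (PA (T x) y))%:E <= cq%:E * opnormA ip A (fun x => (T (Tsh x) + Tsh (T x))%R))%E.
  move=> x y hx hy hxy.
  have [u [cu Au]] := proj x.
  have hu : QA u = 1 by rewrite /Q /ipA Au A_sa Au -A_sa.
  have huy : PA u y = q by rewrite /ipA Au.
  have hTu : PA (T u) y = PA (T x) y.
    apply/eqP; rewrite -subr_eq0 -(PBl Aok) -(linB Tlin) ATker //.
    by rewrite (linB Alin) Au subrr.
  rewrite -hTu.
  have un0 : u <> 0%R by move=> u0; move: hu; rewrite u0 (Q0 Aok) => /eqP; rewrite eq_sym oner_eq0.
  have hel : ((normA ip A (T (Tsh u) + Tsh (T u)) / normA ip A u)%:E <=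
      opnormA ip A (fun x => (T (Tsh x) + Tsh (T x))%R))%E.
    by apply: ereal_sup_ubound; exists u.
  have nu1 : normA ip A u = 1%R by apply/normA1.
  rewrite nu1 divr1 in hel.
  apply: le_trans (lee_wpmul2l _ hel); last by rewrite lee_fin cq_ge0.
  by rewrite -EFinM lee_fin; apply: UB_main.
rewrite -/cq.
case EB : (cq%:E * opnormA ip A (fun x => (T (Tsh x) + Tsh (T x))%R))%E => [b| |]; last first.
- by have := key _ _ hx0 hy0 hxy0; rewrite EB leeNy_eq.
- by rewrite leey.
rewrite EB in key.
have b0 : (0 <= b)%R by rewrite -lee_fin; apply: le_trans (key _ _ hx0 hy0 hxy0); rewrite lee_fin N2_ge0.
have wb : (wq <= (Num.sqrt b)%:E)%E.
  apply: ge_ereal_sup => _ [[x y] [/normA1 hx [/normA1 hy hxy]] <-]; rewrite lee_fin /=.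
  rewrite normc_N2; apply: ler_wsqrtr; rewrite -lee_fin; exact: key.
have wge : ((0%R)%:E <= wq)%E.
  by apply: le_trans ub0; rewrite lee_fin normc_N2 sqrtr_ge0.
move: wb wge; case Ewq : wq => [v| |] //; rewrite !lee_fin => vb v0.
apply: le_trans (_ : v * v <= Num.sqrt b * Num.sqrt b)%R _; first exact: ler_pM.
by rewrite -expr2 sqr_sqrtr.
Qed.

End WithQ.
End Main.

Theorem mainTheorem1 (R : realType) (V : lmodType R[i]) (ip : V -> V -> R[i])
  (HH : is_hilbert ip) (A : V -> V) (HA : positive_op ip A)
  (Hdim : dim_range_ge2 A) (T : V -> V) (HT : in_BA ip A T)
  (Tsh : V -> V) (HTsh : is_A_sharp ip A T Tsh)
  (q : R[i]) (Hq0 : 0 < Normc.normc q) (Hq1 : Normc.normc q <= 1) :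
  let aq := Normc.normc q in
  (((aq ^+ 2 / 4)%R%:E * opnormA ip A (fun x => (Tsh (T x) + T (Tsh x))%R)
      <= wqA ip A q T * wqA ip A q T)%E) /\
  ((wqA ip A q T * wqA ip A q T
      <= ((2 - aq ^+ 2 + 4 * aq * Num.sqrt (1 - aq ^+ 2)) / 2)%R%:E
           * opnormA ip A (fun x => (T (Tsh x) + Tsh (T x))%R))%E).
Proof.
exact: (final HH HA Hdim HT HTsh Hq0 Hq1).
Qed.
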